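(* Let $R$ be a rod set and $\mathsf T$ an expansion subtree of $\mathrm{Tree}(R)$. Let $Q=\langle\mathrm{Inner}(\mathsf T)\rangle$ and $S=\langle\mathrm{Leaves}(\mathsf T)\rangle$. Then for every $n>0$, $$D(n,R,S)=C(n,Q).$$
   Context: A rod is a triple $(r,c,\varepsilon)$ with $r$ a positive integer (length), $c$ a tag (color) and $\varepsilon\in\{\pm1\}$ (sign); rods of sign $-1$ are antirods. A rod set is a set of rods with finitely many rods of each length. A train built from $R$ is a finite sequence of rods of $R$ (including the empty train $\Lambda$); its length is the sum of lengths and its sign the product of signs. For a set $X$ of trains, $\langle X\rangle$ is the rod set containing, for each nonempty train $\tau\in X$, one rod whose length and sign are those of $\tau$. $C(n,R)$ is the number of positive rods of length $n$ in $R$ minus the number of antirods of length $n$. $F(n,R)$ is the number of positive trains of length $n$ built from $R$ minus the number of negative ones, with $F(0,R)=1$ and $F(n,R)=0$ for $n<0$. The discrepancy is $D(n,R,S)=F(n,R)-\sum_{k\in S}(\operatorname{sign}k)F(n-\operatorname{len}(k),R)$. $\mathrm{Tree}(R)$ is the rooted tree with nodes the trains built from $R$, root $\Lambda$, and children of $\tau$ the trains $\tau k$, $k\in R$ (one per rod of $R$). An expansion subtree $\mathsf T$ is a rooted subtree containing all children of the root, and containing all children of any node of which it contains at least one child. $\mathrm{Inner}(\mathsf T)$ is the set of non-root nodes with children in $\mathsf T$; $\mathrm{Leaves}(\mathsf T)$ the set of nodes of $\mathsf T$ with no children in $\mathsf T$. *)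

(* Defs.v *)
From HB Require Import structures.
From mathcomp Require Import all_boot all_order all_algebra.
From mathcomp Require Import boolp.
Set Implicit Arguments. Unset Strict Implicit. Unset Printing Implicit Defensive.
Import Order.TTheory GRing.Theory Num.Theory.

(* A rod set: for each length m, the finite list of signs of its rods of
   length m (true = +1, false = -1 i.e. antirod).  The rods of length m are
   the positions i < size (R m); the position plays the role of the colour.
   Only lengths m > 0 carry rods (R 0 is ignored). *)
Definition rodset := nat -> seq bool.

Definition rod (R : rodset) :=
  {p : nat * nat | (0 < p.1)%N && (p.2 < size (R p.1))%N}.

Definition rlen (R : rodset) (k : rod R) : nat := (val k).1.
Definition rsgn (R : rodset) (k : rod R) : bool := nth true (R (val k).1) (val k).2.

Definition signz (b : bool) : int := if b then 1%R else (-1)%R.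

Definition train (R : rodset) := seq (rod R).
Definition tlen (R : rodset) (t : train R) : nat := \sum_(k <- t) rlen k.
Definition tsignz (R : rodset) (t : train R) : int := (\prod_(k <- t) signz (rsgn k))%R.
Definition tsgn (R : rodset) (t : train R) : bool := tsignz t == 1%R.

Definition rods_of_len (R : rodset) (m : nat) : seq (rod R) :=
  pmap insub [seq (m, i) | i <- iota 0 (size (R m))].
Definition rods_upto (R : rodset) (n : nat) : seq (rod R) :=
  flatten [seq rods_of_len R m | m <- iota 1 n].
Fixpoint tuples (T : Type) (j : nat) (l : seq T) : seq (seq T) :=
  if j is j'.+1 then [seq x :: t | x <- l, t <- tuples j' l] else [:: [::]].
Definition trains_of_len (R : rodset) (n : nat) : seq (train R) :=
  [seq t <- flatten [seq tuples j (rods_upto R n) | j <- iota 0 n.+1]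
     | tlen t == n].

Definition Ccount (n : nat) (R : rodset) : int :=
  if n == 0%N then 0%R else ((count id (R n))%:Z - (count negb (R n))%:Z)%R.

(* F(n,R) for n : int, with F(n,R) = 0 for n < 0 (and F(0,R) = 1 since the
   empty train is the only train of length 0). *)
Definition Fcount_nat (n : nat) (R : rodset) : int :=
  ((count (@tsgn R) (trains_of_len R n))%:Z
   - (count (fun t => ~~ tsgn t) (trains_of_len R n))%:Z)%R.
Definition Fcount (n : int) (R : rodset) : int :=
  if (n < 0)%R then 0%R else Fcount_nat `|n|%N R.

(* D(n,R,S) = F(n,R) - sum_{k in S} sign(k) F(n - len k, R).
   Rods k of S with len k > n contribute F(negative) = 0, so the (possibly
   infinite) sum is the finite sum over the rods of S of length <= n. *)
Definition Dcount (n : nat) (R S : rodset) : int :=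
  (Fcount n%:Z R
   - \sum_(1 <= m < n.+1) \sum_(b <- S m) signz b * Fcount (n%:Z - m%:Z) R)%R.

(* <X>: one rod per nonempty train of X, with the length and sign of that train *)
Definition gen (R : rodset) (X : train R -> Prop) : rodset :=
  fun m => if m == 0%N then [::]
           else [seq tsgn t | t <- trains_of_len R m & `[< X t /\ t <> [::] >]].

(* Tree(R): nodes are the trains, children of t are the trains rcons t k.
   A rooted subtree is given by its (prefix-closed) set of nodes. *)
Definition expansion_subtree (R : rodset) (T : train R -> Prop) : Prop :=
  [/\ T [::],
      (forall t k, T (rcons t k) -> T t),
      (forall k, T [:: k]) &
      (forall t k k', T (rcons t k) -> T (rcons t k'))].

Definition Inner (R : rodset) (T : train R -> Prop) : train R -> Prop :=
  fun t => t <> [::] /\ T t /\ exists k, T (rcons t k).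
Definition Leaves (R : rodset) (T : train R -> Prop) : train R -> Prop :=
  fun t => T t /\ forall k, ~ T (rcons t k).

(* Main.v *)
Require Import Defs.
From HB Require Import structures.
From mathcomp Require Import all_boot all_order all_algebra.
From mathcomp Require Import boolp ring lra zify.
Import Order.TTheory GRing.Theory Num.Theory.
Set Implicit Arguments. Unset Strict Implicit. Unset Printing Implicit Defensive.

Section S.
Variable R : rodset.

Lemma rlen_gt0 (k : rod R) : (0 < rlen k)%N.
Proof. by case/andP: (valP k). Qed.

Lemma tlen_ge_size (t : train R) : (size t <= tlen t)%N.
Proof.
elim: t => [|k t IH]; first by rewrite /tlen big_nil.
by rewrite /tlen big_cons /= -/(tlen t) -add1n leq_add // rlen_gt0.
Qed.

Lemma tlen_cat (t u : train R) : tlen (t ++ u) = (tlen t + tlen u)%N.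
Proof. by rewrite /tlen big_cat. Qed.

Lemma tsignz_cat (t u : train R) : tsignz (t ++ u) = (tsignz t * tsignz u)%R.
Proof. by rewrite /tsignz big_cat. Qed.

Lemma tsignz_pm (t : train R) : tsignz t = 1%R \/ tsignz t = (-1)%R.
Proof.
elim: t => [|k t IH]; first by left; rewrite /tsignz big_nil.
rewrite /tsignz big_cons -/(tsignz t) /signz.
by case: (rsgn k); case: IH => ->; rewrite ?mulN1r ?mul1r ?opprK; auto.
Qed.

Lemma signz_tsgn (t : train R) : signz (tsgn t) = tsignz t.
Proof. by rewrite /tsgn /signz; case: (tsignz_pm t) => ->. Qed.

Lemma count_sum (ts : seq (train R)) :
  ((count (@tsgn R) ts)%:Z - (count (fun t => ~~ tsgn t) ts)%:Z)%R
  = (\sum_(t <- ts) tsignz t)%R.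
Proof.
elim: ts => [|t ts IH]; first by rewrite big_nil.
rewrite big_cons /= -IH -signz_tsgn /signz.
by case: (tsgn t) => /=; rewrite ?add0n ?add1n ?PoszD; ring.
Qed.


Lemma count_sum_map (ts : seq (train R)) :
  ((count id (map (@tsgn R) ts))%:Z - (count negb (map (@tsgn R) ts))%:Z)%R
  = (\sum_(t <- ts) tsignz t)%R.
Proof.
elim: ts => [|t ts IH]; first by rewrite big_nil.
rewrite big_cons /= -IH -signz_tsgn /signz.
by case: (tsgn t) => /=; rewrite ?add0n ?add1n ?PoszD; ring.
Qed.

Lemma uniq_flatten_idx (I T: eqType) (s : seq I) (f : I -> seq T) (g : T -> I) :
  uniq s -> (forall i, i \in s -> uniq (f i)) ->
  (forall i x, i \in s -> x \in f i -> g x = i) -> uniq (flatten (map f s)).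
Proof.
elim: s => [|i s IH] //= /andP[His Hs] Hf Hg.
rewrite cat_uniq Hf ?mem_head // IH //=; last first.
- by move=> j x Hj; apply: Hg; rewrite inE Hj orbT.
- by move=> j Hj; apply: Hf; rewrite inE Hj orbT.
rewrite andbT; apply/hasPn => x /flattenP [u /mapP [j Hj ->] Hx].
apply/negP => Hxi.
have E1 := Hg i x (mem_head _ _) Hxi.
have E2 : g x = j by apply: Hg => //; rewrite inE Hj orbT.
by move: His; rewrite -E1 E2 Hj.
Qed.

Lemma mem_rods_of_len m k : (k \in rods_of_len R m) = (rlen k == m).
Proof.
rewrite /rods_of_len mem_pmap_sub /rlen.
case: k => [[a b] H] /=; case/andP: H => _ Hb /=.
apply/mapP/eqP => [[i _ [->]] //| Ea].
by subst a; exists b => //; rewrite mem_iota.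
Qed.

Lemma uniq_rods_of_len m : uniq (rods_of_len R m).
Proof.
apply: pmap_sub_uniq; rewrite map_inj_uniq ?iota_uniq //.
by move=> x y [].
Qed.

Lemma mem_rods_upto n k : (k \in rods_upto R n) = (rlen k <= n)%N.
Proof.
apply/flattenP/idP => [[u /mapP[m Hm ->]]|Hk].
- rewrite mem_rods_of_len => /eqP ->; move: Hm; rewrite mem_iota; lia.
- exists (rods_of_len R (rlen k)); last by rewrite mem_rods_of_len.
  apply: map_f; rewrite mem_iota; have := rlen_gt0 k; lia.
Qed.

Lemma uniq_rods_upto n : uniq (rods_upto R n).
Proof.
apply: (@uniq_flatten_idx _ _ _ _ (@rlen R)); first exact: iota_uniq.
- by move=> i _; apply: uniq_rods_of_len.
- by move=> i x _; rewrite mem_rods_of_len => /eqP.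
Qed.

Lemma mem_tuples (T : eqType) j (l : seq T) t :
  (t \in tuples j l) = (size t == j) && all (mem l) t.
Proof.
elim: j t => [|j IH] t /=; first by case: t.
apply/allpairsP/idP => [[[x u] [Hx Hu ->]]|].
- by move: Hu; rewrite IH /= eqSS Hx => /andP[-> ->].
- case: t => [|x u] //= /andP[Hs /andP[Hx Ha]].
  by exists (x, u); split => //=; rewrite IH -(eqSS (size u)) Hs.
Qed.

Lemma uniq_tuples (T : eqType) j (l : seq T) : uniq l -> uniq (tuples j l).
Proof.
move=> Hl; elim: j => [|j IH] //=.
apply: allpairs_uniq => //.
by move=> [x u] [y v] _ _ /= [-> ->].
Qed.

Lemma rlen_le_tlen (t : train R) k : k \in t -> (rlen k <= tlen t)%N.
Proof.
elim: t => [|x t IH] //; rewrite inE /tlen big_cons -/(tlen t).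
case/orP => [/eqP ->|/IH]; lia.
Qed.

Lemma mem_TL n t : (t \in trains_of_len R n) = (tlen t == n).
Proof.
rewrite /trains_of_len mem_filter.
apply/andP/idP => [[]//|E]; split => //.
apply/flattenP; exists (tuples (size t) (rods_upto R n)).
- apply/mapP; exists (size t) => //; rewrite mem_iota /=; move/eqP: E => <-.
  by rewrite add0n ltnS tlen_ge_size.
- rewrite mem_tuples eqxx /=; apply/allP => k Hk.
  by rewrite [mem _ _]/= mem_rods_upto -(eqP E) rlen_le_tlen.
Qed.

Lemma uniq_TL n : uniq (trains_of_len R n).
Proof.
apply: filter_uniq.
apply: (@uniq_flatten_idx _ _ _ _ size); first exact: iota_uniq.
- by move=> i _; apply/uniq_tuples/uniq_rods_upto.
- by move=> i x _; rewrite mem_tuples => /andP[/eqP].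
Qed.


Definition pre (t u : train R) := take (size t) u == t.

Lemma F_sum n : Fcount_nat n R = (\sum_(t <- trains_of_len R n) tsignz t)%R.
Proof. exact: count_sum. Qed.

Lemma split_sum n (t : train R) : (tlen t <= n)%N ->
  (tsignz t * Fcount_nat (n - tlen t) R)%R
  = (\sum_(u <- trains_of_len R n | pre t u) tsignz u)%R.
Proof.
move=> Hn; rewrite F_sum big_distrr /=.
transitivity (\sum_(u <- trains_of_len R (n - tlen t)) tsignz (t ++ u))%R.
  by apply: eq_bigr => u _; rewrite tsignz_cat.
rewrite -(big_map (cat t) xpredT (@tsignz R)) -[RHS]big_filter.
apply: perm_big; apply: uniq_perm.
- rewrite map_inj_uniq ?uniq_TL // => u v /(congr1 (drop (size t))).
  by rewrite !drop_size_cat.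
- exact/filter_uniq/uniq_TL.
move=> u; rewrite mem_filter mem_TL; apply/mapP/andP => [[v Hv ->]|[Hp Hl]].
- rewrite mem_TL in Hv; rewrite /pre take_size_cat // eqxx tlen_cat (eqP Hv).
  split => //; apply/eqP; lia.
- exists (drop (size t) u); last by rewrite -{1}(eqP Hp) cat_take_drop.
  rewrite mem_TL; move: Hl; rewrite -{1}(cat_take_drop (size t) u) (eqP Hp) tlen_cat.
  move/eqP => <-; apply/eqP; lia.
Qed.


Variable T : train R -> Prop.
Hypothesis HT : expansion_subtree T.

Definition Tb t := `[< T t >].
Definition lb t := `[< Leaves T t /\ t <> [::] >].
Definition ib t := `[< Inner T t /\ t <> [::] >].
Definition Ln n := flatten [seq trains_of_len R m | m <- iota 1 n].

Lemma mem_Ln n l : (l \in Ln n) = (0 < tlen l <= n)%N.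
Proof.
apply/flattenP/idP => [[u /mapP[m Hm ->]]|Hl].
- rewrite mem_TL => /eqP ->; move: Hm; rewrite mem_iota; lia.
- exists (trains_of_len R (tlen l)); last by rewrite mem_TL.
  apply/mapP; exists (tlen l) => //; rewrite mem_iota; lia.
Qed.

Lemma uniq_Ln n : uniq (Ln n).
Proof.
apply: (@uniq_flatten_idx _ _ _ _ (@tlen R)); first exact: iota_uniq.
- by move=> i _; apply: uniq_TL.
- by move=> i x _; rewrite mem_TL => /eqP.
Qed.

Lemma Tb_take (t : train R) k : Tb (take k.+1 t) -> Tb (take k t).
Proof.
case: HT => _ Hpre _ _.
case: (ltnP k (size t)) => Hk.
- case: t Hk => [|x t] // Hk.
  rewrite /Tb (take_nth x Hk) => /asboolP /Hpre /asboolP //.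
- by rewrite !take_oversize // ltnW.
Qed.

Lemma lb_take (t : train R) k : (0 < k)%N -> (k < size t)%N ->
  lb (take k t) = Tb (take k t) && ~~ Tb (take k.+1 t).
Proof.
case: HT => _ _ _ Hall.
case: t => [|x t] // Hk0 Hk.
rewrite /lb /Tb (take_nth x Hk).
apply/asboolP/andP => [[[HTt Hno] _]|[/asboolP HTt /asboolP Hno]].
- by split; [apply/asboolP | apply/asboolP; apply: Hno].
- split; last by move=> /(congr1 size); rewrite size_takel ?(ltnW Hk) //=; lia.
  by split => // r /Hall.
Qed.

Lemma lb_full (t : train R) : t <> [::] ->
  lb t = Tb t && ~~ `[< exists k, T (rcons t k) >].
Proof.
move=> Ht; rewrite /lb /Tb.
apply/asboolP/andP => [[[HTt Hno] _]|[/asboolP HTt /asboolP Hno]].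
- split; first by apply/asboolP.
  by apply/asboolP => -[k /Hno].
- by split => //; split => // k Hk; apply: Hno; exists k.
Qed.

Lemma ib_full (t : train R) : t <> [::] ->
  ib t = Tb t && `[< exists k, T (rcons t k) >].
Proof.
move=> Ht; rewrite /ib /Tb.
apply/asboolP/andP => [[[_ [HTt Hex]] _]|[/asboolP HTt /asboolP Hex]].
- by split; apply/asboolP.
- by [].
Qed.


Lemma perm_pre n (u : train R) : u \in trains_of_len R n ->
  perm_eq [seq l <- Ln n | pre l u] [seq take k.+1 u | k <- iota 0 (size u)].
Proof.
rewrite mem_TL => /eqP Hu.
apply: uniq_perm.
- exact/filter_uniq/uniq_Ln.
- rewrite map_inj_in_uniq ?iota_uniq // => a b.
  rewrite !mem_iota /= => Ha Hb /(congr1 size).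
  by rewrite !size_takel // => -[].
move=> l; rewrite mem_filter mem_Ln; apply/andP/mapP => [[Hp Hl]|[k Hk ->]].
- exists (size l).-1.
  + rewrite mem_iota /=; have Hs : (size l <= size u)%N.
      by rewrite -(eqP Hp) size_take; case: ifP => // /ltnW.
    case: l Hp Hl Hs => [|x l] //=; rewrite /tlen big_nil //.
  + case: l Hp Hl => [|x l] /=; first by rewrite /tlen big_nil.
    by move=> /eqP ->.
- rewrite mem_iota /= in Hk.
  split; first by rewrite /pre size_takel.
  have Hs := tlen_ge_size (take k.+1 u); rewrite size_takel // in Hs.
  move: Hu; rewrite -{1}(cat_take_drop k.+1 u) tlen_cat; lia.
Qed.

Lemma tele (u : train R) i :
  Tb (take 1 u) ->
  count (fun k => Tb (take k.+1 u) && ~~ Tb (take k.+2 u)) (iota 0 i)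
  = ~~ Tb (take i.+1 u).
Proof.
move=> H1; elim: i => [|i IH]; first by rewrite /= H1.
rewrite -addn1 iotaD count_cat IH /= addn0 add0n.
rewrite addn1; have := @Tb_take u i.+1.
by case: (Tb (take i.+1 u)); case: (Tb (take i.+2 u)) => //= H; have := H isT.
Qed.

Lemma count_leaf n (u : train R) : u \in trains_of_len R n -> (0 < n)%N ->
  count (fun l => lb l && pre l u) (Ln n) = ~~ ib u.
Proof.
move=> Hu Hn.
transitivity (count lb [seq l <- Ln n | pre l u]).
  by rewrite count_filter; apply: eq_count => l.
rewrite (permP (perm_pre Hu)) count_map.
move: Hu Hn; rewrite mem_TL; case: u => [|x t]; first by rewrite /tlen big_nil => /eqP <-.
move=> _ _.
have Hne : x :: t <> [::] by [].
rewrite (_ : size (x :: t) = size t + 1); last by rewrite addn1.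
rewrite iotaD count_cat add0n [count _ (iota _ 1)]/= addn0.
rewrite take_size (@eq_in_count _ _ (fun k => Tb (take k.+1 (x :: t)) && ~~ Tb (take k.+2 (x :: t)))); last first.
  move=> k; rewrite mem_iota /= add0n => Hk.
  by change (lb (take k.+1 (x :: t)) = Tb (take k.+1 (x :: t)) && ~~ Tb (take k.+2 (x :: t)));
    rewrite lb_take //=; lia.
rewrite tele; last first.
  by case: HT => _ _ Hs _; rewrite /Tb /= take0; apply/asboolP.
rewrite [take _.+1 (x :: t)]/= take_size lb_full // ib_full //.
by case: (Tb _); case: `[< _ >].
Qed.


Lemma Fcount_natE m : Fcount m%:Z R = Fcount_nat m R.
Proof. by rewrite /Fcount ltNge (_ : (0 <= m%:Z)%R = true) //= absz_nat. Qed.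

Lemma main_sec n : (0 < n)%N ->
  Dcount n R (gen (Leaves T)) = Ccount n (gen (Inner T)).
Proof.
move=> Hn.
have Hn0 : (n == 0%N) = false by lia.
have -> : Ccount n (gen (Inner T)) =
    (\sum_(u <- trains_of_len R n) tsignz u *+ ib u)%R.
  rewrite /Ccount /gen Hn0 count_sum_map.
  rewrite big_filter big_mkcond; apply: eq_bigr => u _.
  by rewrite /ib; case: `[< _ >]; rewrite ?mulr1n ?mulr0n.
rewrite /Dcount Fcount_natE F_sum.
have -> : (\sum_(1 <= m < n.+1)
      \sum_(b <- gen (Leaves T) m) signz b * Fcount (n%:Z - m%:Z) R)%R
    = (\sum_(l <- Ln n | lb l) tsignz l * Fcount_nat (n - tlen l) R)%R.
  rewrite /Ln big_flatten big_map.
  have -> : iota 1 n = index_iota 1 n.+1 by rewrite /index_iota subSS subn0.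
  apply: eq_big_nat => m /andP[Hm1 Hm2].
  rewrite /gen (_ : (m == 0%N) = false); last by lia.
  rewrite big_map big_filter big_seq_cond [RHS]big_seq_cond.
  apply: eq_bigr => l /andP[Hl _].
  rewrite signz_tsgn subzn ?Fcount_natE; last by lia.
  by move: Hl; rewrite mem_TL => /eqP ->.
rewrite [X in (_ - X)%R]big_seq_cond.
rewrite [X in (_ - X)%R](eq_bigr (fun l => \sum_(u <- trains_of_len R n | pre l u) tsignz u)%R); last first.
  move=> l /andP[Hl _]; apply: split_sum; move: Hl; rewrite mem_Ln; lia.
rewrite -[X in (_ - X)%R]big_seq_cond (exchange_big_dep xpredT) //=.
rewrite -sumrB; apply: eq_big_seq => u Hu.
rewrite big_const_seq count_leaf //.
by case: (ib u) => /=; rewrite ?addr0 ?subrr ?subr0 ?mulr1n ?mulr0n.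
Qed.

End S.

Theorem mainTheorem4 (R : rodset) (T : train R -> Prop) :
  expansion_subtree T ->
  forall n : nat, (0 < n)%N ->
    Dcount n R (gen (Leaves T)) = Ccount n (gen (Inner T)).
Proof. by move=> HT n Hn; apply: main_sec. Qed.
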